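(* Let $R$ be a ring, $S$ an Ore set of $R$, and $\mathfrak{a}=\mathrm{ass}_R(S)$. Let $\mathfrak{a}_l=\mathrm{ass}_l(S)$, $\pi_l:R\to R_l:=R/\mathfrak{a}_l$; $\mathfrak{a}_r=\mathrm{ass}_r(S)$, $\pi_r:R\to R_r:=R/\mathfrak{a}_r$ (natural maps). Then \begin{enumerate} \item $\mathfrak{a}_l+\mathfrak{a}_r\subseteq\mathfrak{a}$. \item $S_l:=\pi_l(S)\in\mathrm{Den}'_r(R_l,\mathfrak{a}/\mathfrak{a}_l)$ and $R_lS_l^{-1}\simeq S^{-1}R\simeq RS^{-1}$, $R$-isomorphisms. \item $S_r:=\pi_r(S)\in{}'\mathrm{Den}_l(R_r,\mathfrak{a}/\mathfrak{a}_r)$ and $S_r^{-1}R_r\simeq S^{-1}R\simeq RS^{-1}\simeq R_lS_l^{-1}$, $R$-isomorphisms. \item ${}'\mathfrak{a}(S)=\mathfrak{a}_r$ and $\mathfrak{a}'(S)=\mathfrak{a}_l$. \end{enumerate}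
   Context: Rings are associative with $1$. Multiplicative set: $SS\subseteq S$, $1\in S$, $0\notin S$. Ore set: $Sr\cap Rs\ne\emptyset$ and $rS\cap sR\neq\emptyset$ for all $r\in R,s\in S$. $\mathrm{ass}_l(S)=\{r: sr=0\text{ for some } s\in S\}$, $\mathrm{ass}_r(S)=\{r: rs=0\text{ for some } s\in S\}$. $R\langle S^{-1}\rangle=R\langle X_S\rangle/I_S$ ($R\langle X_S\rangle$ freely generated by $R$ and noncommuting $x_s$; $I_S$ generated by $sx_s-1,x_ss-1$); $\mathrm{ass}_R(S)=\ker(R\to R\langle S^{-1}\rangle)$; here $S^{-1}R$ and $RS^{-1}$ both denote $R\langle S^{-1}\rangle$. Left/right denominator sets: a left Ore set $T$ with $rt=0\Rightarrow t'r=0$ for some $t,t'\in T$, and symmetrically; $T^{-1}A$, $AT^{-1}$ are Ore localizations. For a ring $A$: ${}'\mathcal{C}_A=\{r: xr=0\Rightarrow x=0\}$, $\mathcal{C}'_A=\{r:rx=0\Rightarrow x=0\}$. ${}'\mathrm{Den}_l(A,\mathfrak{c})=\{T \text{ left denominator set of } A: \mathrm{ass}_l(T)=\mathfrak{c},\ T\subseteq{}'\mathcal{C}_A\}$ and $\mathrm{Den}'_r(A,\mathfrak{c})=\{T\text{ right denominator set}:\mathrm{ass}_r(T)=\mathfrak{c},\ T\subseteq\mathcal{C}'_A\}$. ${}'\mathfrak{a}(S)$ (resp. $\mathfrak{a}'(S)$) is the least ideal $\mathfrak{b}$ of $R$ such that the image of $S$ in $R/\mathfrak{b}$ lies in ${}'\mathcal{C}_{R/\mathfrak{b}}$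 (resp. $\mathcal{C}'_{R/\mathfrak{b}}$). *)

(* Defs.v *)
From HB Require Import structures.
From mathcomp Require Import all_boot all_algebra.
Set Implicit Arguments. Unset Strict Implicit. Unset Printing Implicit Defensive.
Import GRing.Theory.
Local Open Scope ring_scope.

Definition subs (T : Type) := T -> Prop.

Definition image_of (A B : Type) (f : A -> B) (X : subs A) : subs B :=
  fun y => exists x, X x /\ f x = y.

Definition same_set (T : Type) (X Y : subs T) : Prop := forall x, X x <-> Y x.

Definition is_invertible (A : pzRingType) (a : A) : Prop :=
  exists b : A, a * b = 1 /\ b * a = 1.

Definition mult_set (A : pzRingType) (S : subs A) : Prop :=
  S 1 /\ ~ S 0 /\ (forall a b, S a -> S b -> S (a * b)).

Definition left_ore (A : pzRingType) (S : subs A) : Prop :=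
  forall (r s : A), S s -> exists s' r', S s' /\ s' * r = r' * s.
Definition right_ore (A : pzRingType) (S : subs A) : Prop :=
  forall (r s : A), S s -> exists s' r', S s' /\ r * s' = s * r'.

Definition ore_set (A : pzRingType) (S : subs A) : Prop :=
  mult_set S /\ left_ore S /\ right_ore S.

Definition ass_l (A : pzRingType) (S : subs A) : subs A :=
  fun r => exists s, S s /\ s * r = 0.
Definition ass_r (A : pzRingType) (S : subs A) : subs A :=
  fun r => exists s, S s /\ r * s = 0.

Definition left_denom (A : pzRingType) (T : subs A) : Prop :=
  mult_set T /\ left_ore T /\
  (forall r t, T t -> r * t = 0 -> exists t', T t' /\ t' * r = 0).
Definition right_denom (A : pzRingType) (T : subs A) : Prop :=
  mult_set T /\ right_ore T /\
  (forall r t, T t -> t * r = 0 -> exists t', T t' /\ r * t' = 0).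

Definition lC (A : pzRingType) (r : A) : Prop := forall x, x * r = 0 -> x = 0.
Definition rC (A : pzRingType) (r : A) : Prop := forall x, r * x = 0 -> x = 0.

(* T ∈ 'Den_l(A, c) and T ∈ Den'_r(A, c) *)
Definition in_Den_l' (A : pzRingType) (T : subs A) (c : subs A) : Prop :=
  left_denom T /\ same_set (ass_l T) c /\ (forall t, T t -> lC t).
Definition in_Den_r' (A : pzRingType) (T : subs A) (c : subs A) : Prop :=
  right_denom T /\ same_set (ass_r T) c /\ (forall t, T t -> rC t).

(* (L, phi) is the universal localization R<S^{-1}> = R<X_S>/I_S of R at S,
   characterized (up to unique R-isomorphism) by its universal property:
   phi(S) consists of units and every ring map R -> B inverting S factors
   uniquely through phi. *)
Definition is_univ_loc (R : pzRingType) (S : subs R) (L : pzRingType)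
    (phi : {rmorphism R -> L}) : Prop :=
  (forall s, S s -> is_invertible (phi s)) /\
  forall (B : pzRingType) (f : {rmorphism R -> B}),
    (forall s, S s -> is_invertible (f s)) ->
    exists g : {rmorphism L -> B},
      (forall r, g (phi r) = f r) /\
      (forall g' : {rmorphism L -> B}, (forall r, g' (phi r) = f r) ->
         forall x, g' x = g x).

Definition is_left_fractions (A : pzRingType) (T : subs A) (Q : pzRingType)
    (sigma : {rmorphism A -> Q}) : Prop :=
  (forall t, T t -> is_invertible (sigma t)) /\
  (forall q : Q, exists t a, T t /\ exists u, u * sigma t = 1 /\ sigma t * u = 1
                                     /\ q = u * sigma a) /\
  (forall a, sigma a = 0 <-> ass_l T a).
Definition is_right_fractions (A : pzRingType) (T : subs A) (Q : pzRingType)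
    (sigma : {rmorphism A -> Q}) : Prop :=
  (forall t, T t -> is_invertible (sigma t)) /\
  (forall q : Q, exists t a, T t /\ exists u, u * sigma t = 1 /\ sigma t * u = 1
                                     /\ q = sigma a * u) /\
  (forall a, sigma a = 0 <-> ass_r T a).

Definition R_iso (R L Q : pzRingType) (phi : R -> L) (psi : R -> Q) : Prop :=
  exists g : {rmorphism L -> Q}, bijective g /\ forall r, g (phi r) = psi r.

Definition is_ideal (R : pzRingType) (b : subs R) : Prop :=
  b 0 /\ (forall x y, b x -> b y -> b (x - y)) /\
  (forall r x, b x -> b (r * x)) /\ (forall r x, b x -> b (x * r)).

(* image of S in R/b lies in 'C_{R/b}, resp. C'_{R/b}, written out modulo b *)
Definition S_in_lC_mod (R : pzRingType) (S : subs R) (b : subs R) : Prop :=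
  forall s x, S s -> b (x * s) -> b x.
Definition S_in_rC_mod (R : pzRingType) (S : subs R) (b : subs R) : Prop :=
  forall s x, S s -> b (s * x) -> b x.

Definition least_ideal (R : pzRingType) (P : subs R -> Prop) (b : subs R) : Prop :=
  is_ideal b /\ P b /\ (forall c, is_ideal c -> P c -> forall x, b x -> c x).

(* Main.v *)
Require Import Defs.
From HB Require Import structures.
From mathcomp Require Import all_boot all_algebra.
From mathcomp Require boolp.
From Stdlib Require Import ClassicalEpsilon FunctionalExtensionality PropExtensionality ProofIrrelevance.
Import GRing.Theory.
Local Open Scope ring_scope.

Set Implicit Arguments. Unset Strict Implicit. Unset Printing Implicit Defensive.

Section Loc.
Variables (A : pzRingType) (T : subs A).
Hypotheses (T1 : T 1) (TM : forall a b, T a -> T b -> T (a * b))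
  (Tore : left_ore T) (TlC : forall t, T t -> lC t).

Definition rel (x y : A * A) := exists c c', T (c * x.1) /\ c * x.1 = c' * y.1 /\ c * x.2 = c' * y.2.

Lemma rel_refl x : T x.1 -> rel x x.
Proof. by move=> h; exists 1, 1; rewrite !mul1r. Qed.

Lemma rel_sym x y : rel x y -> rel y x.
Proof. by case=> c [c' [h1 [h2 h3]]]; exists c', c; rewrite -h2 -h3. Qed.

Lemma rel_trans x y z : T y.1 -> rel x y -> rel y z -> rel x z.
Proof.
move=> Ty [c [c' [h1 [h2 h3]]]] [d [d' [k1 [k2 k3]]]].
have [e [e' [Te He]]] := Tore (c * x.1) k1.
have E : e * c' = e' * d.
  apply/eqP; rewrite -subr_eq0; apply/eqP; apply: (TlC Ty).
  by rewrite mulrBl -!mulrA -h2 He mulrA subrr.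
exists (e * c), (e' * d'); split; first by rewrite -mulrA; apply: TM.
split; first by rewrite -!mulrA -k2 h2 !mulrA E.
by rewrite -!mulrA -k3 h3 !mulrA E.
Qed.

Lemma rel_scale c t a : T (c * t) -> rel (c * t, c * a) (t, a).
Proof. by move=> h; exists 1, c; rewrite !mul1r. Qed.

Lemma lC_eq t x y : T t -> x * t = y * t -> x = y.
Proof.
move=> Tt h; apply/eqP; rewrite -subr_eq0; apply/eqP; apply: (TlC Tt).
by rewrite mulrBl h subrr.
Qed.

Lemma rel_add u p q t a b : T u -> T t -> rel (u, p) (t, a) -> rel (u, q) (t, b) ->
  rel (u, p + q) (t, a + b).
Proof.
move=> Tu Tt [c [c' [h1 [h2 h3]]]] [d [d' [k1 [k2 k3]]]]; simpl in *.
have [e [e' [Te He]]] := Tore (c * u) k1.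
have E1 : e * c = e' * d.
  apply: (lC_eq Tu). rewrite -!mulrA. exact He.
have E2 : e * c' = e' * d' by apply: (lC_eq Tt); rewrite -!mulrA -h2 -k2.
exists (e * c), (e * c'); split; first by rewrite -mulrA; apply: TM.
split; first by rewrite -!mulrA h2.
have X1 : e * c * p = e * c' * a by rewrite -!mulrA h3.
have X2 : e * c * q = e * c' * b by rewrite E1 E2 -!mulrA k3.
by rewrite /= !mulrDr X1 X2.
Qed.

Lemma rel_opp u p t a : rel (u, p) (t, a) -> rel (u, - p) (t, - a).
Proof. by case=> c [c' [h1 [h2 h3]]]; exists c, c'; rewrite /= !mulrN h3. Qed.

Lemma rel_mulr u p t a b : rel (u, p) (t, a) -> rel (u, p * b) (t, a * b).
Proof. by case=> c [c' [h1 [h2 h3]]]; exists c, c'; rewrite /= !mulrA h3. Qed.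


Lemma rel_scale' c x : T (c * x.1) -> rel x (c * x.1, c * x.2).
Proof. by case: x => t a h; apply: rel_sym; apply: rel_scale. Qed.

Definition cls x : A * A -> Prop := fun y => T y.1 /\ rel x y.
Definition M := {P : A * A -> Prop | exists x, T x.1 /\ P = cls x}.

Lemma M_eq (m n : M) : proj1_sig m = proj1_sig n -> m = n.
Proof.
case: m n => [P p] [Q q] /= E; subst Q; congr exist; apply: proof_irrelevance.
Qed.

Lemma cls_eq x y : T x.1 -> T y.1 -> rel x y -> cls x = cls y.
Proof.
move=> Tx Ty r; apply: functional_extensionality => z.
apply: propositional_extensionality; split; case=> Tz h; split => //.
  exact: rel_trans Tx (rel_sym r) h.
exact: rel_trans Ty r h.
Qed.

Definition mk (x : A * A) : M :=
  match excluded_middle_informative (T x.1) with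
  | left h => exist _ (cls x) (ex_intro _ x (conj h erefl))
  | right _ => exist _ (cls (1, 0)) (ex_intro _ (1, 0) (conj T1 erefl))
  end.

Lemma val_mk x : T x.1 -> proj1_sig (mk x) = cls x.
Proof. by rewrite /mk; case: excluded_middle_informative. Qed.

Definition rep (m : M) : A * A :=
  epsilon (inhabits (1, 0)) (fun x => T x.1 /\ proj1_sig m = cls x).

Lemma rep_spec m : T (rep m).1 /\ proj1_sig m = cls (rep m).
Proof. exact: (epsilon_spec _ _ (proj2_sig m)). Qed.

Lemma repT m : T (rep m).1.
Proof. by case: (rep_spec m). Qed.

Lemma mk_rep m : mk (rep m) = m.
Proof. apply: M_eq; rewrite val_mk; [by case: (rep_spec m) | exact: repT]. Qed.

Lemma mk_eq x y : T x.1 -> T y.1 -> rel x y -> mk x = mk y.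
Proof. by move=> Tx Ty r; apply: M_eq; rewrite !val_mk //; apply: cls_eq. Qed.

Lemma mk_inj x y : T x.1 -> T y.1 -> mk x = mk y -> rel x y.
Proof.
move=> Tx Ty E; have : cls y y by split => //; apply: rel_refl.
by rewrite -(val_mk Ty) -E val_mk //; case.
Qed.

Lemma rep_mk x : T x.1 -> rel (rep (mk x)) x.
Proof.
move=> Tx; have : cls x x by split => //; apply: rel_refl.
by case: (rep_spec (mk x)) => _; rewrite val_mk // => ->; case.
Qed.

Definition ow (r s : A) : A * A :=
  epsilon (inhabits (1, 0)) (fun p => T p.1 /\ p.1 * r = p.2 * s).

Lemma ow_spec r s : T s -> T (ow r s).1 /\ (ow r s).1 * r = (ow r s).2 * s.
Proof.
move=> Ts; have [s' [r' [h1 h2]]] := Tore r Ts.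
exact: (epsilon_spec _ (fun p : A * A => T p.1 /\ p.1 * r = p.2 * s) (ex_intro _ (s', r') (conj h1 h2))).
Qed.

Definition addrep x y := let e := ow x.1 y.1 in (e.1 * x.1, e.1 * x.2 + e.2 * y.2).

Lemma addrepT x y : T x.1 -> T y.1 -> T (addrep x y).1.
Proof. by move=> Tx Ty; case: (ow_spec x.1 Ty) => h _; apply: TM. Qed.

Lemma addrep_rel x y t a b : T x.1 -> T y.1 -> T t -> rel x (t, a) -> rel y (t, b) ->
  rel (addrep x y) (t, a + b).
Proof.
move=> Tx Ty Tt rx ry; case: (ow_spec x.1 Ty) => Te E.
have Tu : T ((ow x.1 y.1).1 * x.1) by apply: TM.
apply: rel_add => //.
  apply: rel_trans Tx _ rx; exact: rel_sym (rel_scale' Tu).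
apply: rel_trans Ty _ ry; rewrite E; apply: rel_sym; apply: rel_scale'; by rewrite -E.
Qed.

Definition madd m n := mk (addrep (rep m) (rep n)).
Definition mzero := mk (1, 0).
Definition mopp m := mk ((rep m).1, - (rep m).2).
Definition act b m := mk ((rep m).1, (rep m).2 * b).

Lemma madd_mk x y t a b : T x.1 -> T y.1 -> T t -> rel x (t, a) -> rel y (t, b) ->
  madd (mk x) (mk y) = mk (t, a + b).
Proof.
move=> Tx Ty Tt rx ry; apply: mk_eq => //; first by apply: addrepT; apply: repT.
by apply: addrep_rel => //; try apply: repT;
  [apply: rel_trans Tx (rep_mk Tx) rx | apply: rel_trans Ty (rep_mk Ty) ry].
Qed.

Lemma mopp_mk x : T x.1 -> mopp (mk x) = mk (x.1, - x.2).
Proof.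
move=> Tx; apply: mk_eq => //; first exact: repT.
case: x Tx => t a Tx; have := rep_mk Tx; case: (rep (mk (t, a))) => u p; exact: rel_opp.
Qed.

Lemma act_mk b x : T x.1 -> act b (mk x) = mk (x.1, x.2 * b).
Proof.
move=> Tx; apply: mk_eq => //; first exact: repT.
case: x Tx => t a Tx; have := rep_mk Tx; case: (rep (mk (t, a))) => u p; exact: rel_mulr.
Qed.

Lemma common x y : T x.1 -> T y.1 -> exists t a b, T t /\ rel x (t, a) /\ rel y (t, b).
Proof.
move=> Tx Ty; case: (ow_spec x.1 Ty) => Te E.
have Tu : T ((ow x.1 y.1).1 * x.1) by apply: TM.
exists ((ow x.1 y.1).1 * x.1), ((ow x.1 y.1).1 * x.2), ((ow x.1 y.1).2 * y.2).
split => //; split; first exact: rel_scale'.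
rewrite E; apply: rel_scale'; by rewrite -E.
Qed.

Lemma common3 x y z : T x.1 -> T y.1 -> T z.1 ->
  exists t a b c, T t /\ rel x (t, a) /\ rel y (t, b) /\ rel z (t, c).
Proof.
move=> Tx Ty Tz; case: (ow_spec x.1 Ty) => Te E.
set e1 := (ow x.1 y.1).1 in Te E *; set e2 := (ow x.1 y.1).2 in E *.
have Tu : T (e1 * x.1) by apply: TM.
case: (ow_spec (e1 * x.1) Tz) => Tf F.
set f1 := (ow (e1 * x.1) z.1).1 in Tf F *; set f2 := (ow (e1 * x.1) z.1).2 in F *.
have Tt : T (f1 * (e1 * x.1)) by apply: TM.
exists (f1 * (e1 * x.1)), (f1 * e1 * x.2), (f1 * e2 * y.2), (f2 * z.2).
split => //; split; last split.
- rewrite mulrA; apply: rel_scale'; by rewrite -mulrA.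
- rewrite E mulrA; apply: rel_scale'; by rewrite -mulrA -E.
- rewrite F; apply: rel_scale'; by rewrite -F.
Qed.

Lemma mk_pair m : m = mk (rep m).
Proof. by rewrite mk_rep. Qed.

Lemma maddA : associative madd.
Proof.
move=> m n p; rewrite (mk_pair m) (mk_pair n) (mk_pair p).
have Tx := repT m; have Ty := repT n; have Tz := repT p.
have [t [a [b [c [Tt [ra [rb rc]]]]]]] := common3 Tx Ty Tz.
rewrite (madd_mk Ty Tz Tt rb rc) (madd_mk Tx Ty Tt ra rb).
rewrite (@madd_mk (rep m) (t, b + c) t a (b + c) Tx Tt Tt ra (@rel_refl (t, b + c) Tt)).
by rewrite (@madd_mk (t, a + b) (rep p) t (a + b) c Tt Tz Tt (@rel_refl (t, a + b) Tt) rc) addrA.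
Qed.

Lemma maddC : commutative madd.
Proof.
move=> m n; rewrite (mk_pair m) (mk_pair n).
have Tx := repT m; have Ty := repT n.
have [t [a [b [Tt [ra rb]]]]] := common Tx Ty.
by rewrite (madd_mk Tx Ty Tt ra rb) (madd_mk Ty Tx Tt rb ra) addrC.
Qed.

Lemma rel_zero t : T t -> rel (1, 0) (t, 0).
Proof. by move=> Tt; exists t, 1; rewrite /= !mulr1 !mul1r !mulr0; split => //; split. Qed.

Lemma madd0 : left_id mzero madd.
Proof.
move=> m; rewrite (mk_pair m); have Tx := repT m.
rewrite /mzero (@madd_mk (1, 0) (rep m) (rep m).1 0 (rep m).2 T1 Tx Tx (rel_zero Tx)) ?add0r; last by case: (rep m) Tx => ? ? ?; apply: rel_refl.
by case: (rep m).
Qed.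

Lemma maddN : left_inverse mzero mopp madd.
Proof.
move=> m; rewrite (mk_pair m); have Tx := repT m.
rewrite mopp_mk //.
rewrite (@madd_mk ((rep m).1, - (rep m).2) (rep m) (rep m).1 (- (rep m).2) (rep m).2 Tx Tx Tx) ?addNr;
  [|exact: (@rel_refl ((rep m).1, - (rep m).2)) | by case: (rep m) Tx => ? ? ?; apply: rel_refl].
apply: mk_eq => //; exact: rel_sym (rel_zero Tx).
Qed.

HB.instance Definition _ := boolp.gen_eqMixin M.
HB.instance Definition _ := boolp.gen_choiceMixin M.
HB.instance Definition _ := GRing.isZmodule.Build M maddA maddC madd0 maddN.

Lemma rel_mulr' x t a b : rel x (t, a) -> rel (x.1, x.2 * b) (t, a * b).
Proof. by case: x => u p; apply: rel_mulr. Qed.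

Lemma act_add b m n : act b (m + n) = act b m + act b n.
Proof.
rewrite (mk_pair m) (mk_pair n); have Tx := repT m; have Ty := repT n.
have [t [a [c [Tt [ra rc]]]]] := common Tx Ty.
change (act b (madd (mk (rep m)) (mk (rep n))) = madd (act b (mk (rep m))) (act b (mk (rep n)))).
rewrite (madd_mk Tx Ty Tt ra rc) !act_mk //=.
rewrite (@madd_mk ((rep m).1, (rep m).2 * b) ((rep n).1, (rep n).2 * b) t (a * b) (c * b)) //.
  by rewrite mulrDl.
exact: rel_mulr'. exact: rel_mulr'.
Qed.

Lemma act_plus b1 b2 m : act (b1 + b2) m = act b1 m + act b2 m.
Proof.
rewrite (mk_pair m); have Tx := repT m; rewrite !act_mk //.
change (mk ((rep m).1, (rep m).2 * (b1 + b2)) =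
  madd (mk ((rep m).1, (rep m).2 * b1)) (mk ((rep m).1, (rep m).2 * b2))).
rewrite (@madd_mk ((rep m).1, (rep m).2 * b1) ((rep m).1, (rep m).2 * b2) (rep m).1 ((rep m).2 * b1) ((rep m).2 * b2)) //.
  by rewrite mulrDr.
exact: (@rel_refl ((rep m).1, _)). exact: (@rel_refl ((rep m).1, _)).
Qed.

Lemma act_one m : act 1 m = m.
Proof. by rewrite /act mulr1 -surjective_pairing mk_rep. Qed.

Lemma act_mul b1 b2 m : act (b1 * b2) m = act b2 (act b1 m).
Proof.
rewrite (mk_pair m); have Tx := repT m; rewrite !act_mk //= mulrA //.
Qed.

Lemma act_inj u m n : T u -> act u m = act u n -> m = n.
Proof.
move=> Tu; rewrite (mk_pair m) (mk_pair n); have Tx := repT m; have Ty := repT n.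
rewrite !act_mk // => /mk_inj [] // c [c' [h1 [h2 h3]]].
apply: mk_eq => //; exists c, c'; split => //; split => //.
by apply: (lC_eq Tu); rewrite -!mulrA.
Qed.

Lemma act_surj u m : T u -> exists n, act u n = m.
Proof.
move=> Tu; rewrite (mk_pair m); have Tx := repT m.
have [e [d [Te E]]] := Tore (rep m).2 Tu.
have Tt : T (e * (rep m).1) by apply: TM.
exists (mk (e * (rep m).1, d)); rewrite act_mk //= -E.
apply: mk_eq => //; apply: rel_sym; exact: rel_scale'.
Qed.

Lemma act_ker b : act b (mk (1, 1)) = 0 -> exists t, T t /\ t * b = 0.
Proof.
rewrite act_mk //= mul1r => /mk_inj [] // c [c' [h1 [h2 h3]]].
by exists c; move: h1 h2 h3 => /=; rewrite !mulr1 mulr0 => h1 h2 ->; split.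
Qed.

Definition Bprop (g : M -> M) := forall m n, g (m + n) = g m + g n.
Definition Bt := sig Bprop.

Lemma B_eq (g h : Bt) : (forall m, proj1_sig g m = proj1_sig h m) -> g = h.
Proof.
case: g h => [g p] [h q] /= E.
have E' : g = h by apply: functional_extensionality.
subst h; congr exist; apply: proof_irrelevance.
Qed.

Definition bz : Bt := exist Bprop (fun _ => 0) (fun m n => esym (addr0 0)).
Definition badd (g h : Bt) : Bt := exist Bprop (fun m => proj1_sig g m + proj1_sig h m)
  (fun m n => ltac:(by simpl; rewrite (proj2_sig g) (proj2_sig h) addrACA)).
Definition bopp (g : Bt) : Bt := exist Bprop (fun m => - proj1_sig g m)
  (fun m n => ltac:(by simpl; rewrite (proj2_sig g) opprD)).
Definition bone : Bt := exist Bprop (fun m => m) (fun m n => erefl).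
Definition bmul (g h : Bt) : Bt := exist Bprop (fun m => proj1_sig h (proj1_sig g m))
  (fun m n => ltac:(by simpl; rewrite (proj2_sig g) (proj2_sig h))).

Lemma baddA : associative badd.
Proof. by move=> ? ? ?; apply: B_eq => m /=; rewrite addrA. Qed.
Lemma baddC : commutative badd.
Proof. by move=> ? ?; apply: B_eq => m /=; rewrite addrC. Qed.
Lemma badd0 : left_id bz badd.
Proof. by move=> ?; apply: B_eq => m /=; rewrite add0r. Qed.
Lemma baddN : left_inverse bz bopp badd.
Proof. by move=> ?; apply: B_eq => m /=; rewrite addNr. Qed.
Lemma bmulA : associative bmul.
Proof. by move=> ? ? ?; apply: B_eq. Qed.
Lemma bmul1 : left_id bone bmul.
Proof. by move=> ?; apply: B_eq. Qed.
Lemma bmul1' : right_id bone bmul.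
Proof. by move=> ?; apply: B_eq. Qed.
Lemma bmulDl : left_distributive bmul badd.
Proof. by move=> g1 g2 h; apply: B_eq => m /=; rewrite (proj2_sig h). Qed.
Lemma bmulDr : right_distributive bmul badd.
Proof. by move=> g h1 h2; apply: B_eq. Qed.

HB.instance Definition _ := boolp.gen_eqMixin Bt.
HB.instance Definition _ := boolp.gen_choiceMixin Bt.
HB.instance Definition _ := GRing.isPzRing.Build Bt baddA baddC badd0 baddN bmulA bmul1 bmul1' bmulDl bmulDr.

Definition fB (b : A) : Bt := exist Bprop (act b) (act_add b).

Lemma fB_add : zmod_morphism fB.
Proof.
move=> x y; apply: B_eq => m /=.
change (act (x - y) m = act x m - act y m).
apply: (addIr (act y m)); rewrite -act_plus subrK addrNK //.
Qed.

Lemma fB_mul : monoid_morphism fB.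
Proof.
split; first by apply: B_eq => m; exact: act_one.
by move=> x y; apply: B_eq => m /=; exact: act_mul.
Qed.

HB.instance Definition _ := GRing.isZmodMorphism.Build A Bt fB fB_add.
HB.instance Definition _ := GRing.isMonoidMorphism.Build A Bt fB fB_mul.

Lemma fB_inv u : T u -> is_invertible (fB u).
Proof.
move=> Tu.
pose iv (m : M) := epsilon (inhabits 0) (fun n => act u n = m).
have iv_spec m : act u (iv m) = m.
  have [n hn] := act_surj m Tu.
  exact: (epsilon_spec _ (fun n => act u n = m) (ex_intro _ n hn)).
have iv_add m n : iv (m + n) = iv m + iv n.
  by apply: (act_inj Tu); rewrite act_add !iv_spec.
exists (exist Bprop iv iv_add); split; apply: B_eq => m /=.
  by apply: (act_inj Tu); rewrite iv_spec.
exact: iv_spec.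
Qed.

Lemma loc_exists : exists (B : pzRingType) (f : {rmorphism A -> B}),
  (forall t, T t -> is_invertible (f t)) /\ (forall a, f a = 0 -> exists t, T t /\ t * a = 0).
Proof.
exists Bt, fB; split; first exact: fB_inv.
move=> a E; apply: act_ker.
have := f_equal (fun g : Bt => proj1_sig g (mk (1, 1))) E; by [].
Qed.

End Loc.

Lemma cancel_r (B : pzRingType) (y a b : B) : is_invertible y -> a * y = b * y -> a = b.
Proof. by case=> u [h1 h2] E; rewrite -[a]mulr1 -[b]mulr1 -h1 !mulrA E. Qed.

Lemma cancel_l (B : pzRingType) (y a b : B) : is_invertible y -> y * a = y * b -> a = b.
Proof. by case=> u [h1 h2] E; rewrite -[a]mul1r -[b]mul1r -h2 -!mulrA E. Qed.

Lemma kill_gen (R B : pzRingType) (S : subs R) (f : {rmorphism R -> B}) s s' x :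
  (forall s, S s -> is_invertible (f s)) -> S s -> S s' -> s' * x * s = 0 -> f x = 0.
Proof.
move=> hf Ss Ss' E.
have E' : f s' * (f x * f s) = f s' * 0 by rewrite mulr0 mulrA -!rmorphM E rmorph0.
have E1 := cancel_l (hf _ Ss') E'.
by apply: (cancel_r (hf _ Ss)); rewrite E1 mul0r.
Qed.

Section UnivR.
Variables (R Q : pzRingType) (S : subs R) (hS : ore_set S) (F : {rmorphism R -> Q}).
Hypotheses (U1 : forall s, S s -> is_invertible (F s))
  (U2 : forall q, exists s r, S s /\ q * F s = F r)
  (U3 : forall x, F x = 0 -> exists s s', S s /\ S s' /\ s' * x * s = 0).

Section B.
Variables (B : pzRingType) (f : {rmorphism R -> B}) (hf : forall s, S s -> is_invertible (f s)).

Lemma killF x y : F x = F y -> f x = f y.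
Proof.
move=> E; apply/eqP; rewrite -subr_eq0 -rmorphB; apply/eqP.
have [s [s' [Ss [Ss' E']]]] := @U3 (x - y) ltac:(by rewrite rmorphB E subrr).
exact: kill_gen hf Ss Ss' E'.
Qed.

Definition Pq q y := forall s r, S s -> q * F s = F r -> y * f s = f r.

Lemma SM a b : S a -> S b -> S (a * b).
Proof. by case: hS => [[_ [_ h]] _]; apply: h. Qed.
Lemma ROre r s : S s -> exists s' r', S s' /\ r * s' = s * r'.
Proof. by case: hS => [_ [_ h]]; apply: h. Qed.

Lemma Pq_ex q : exists y, Pq q y.
Proof.
have [s0 [r0 [Ss0 E0]]] := U2 q.
have [u0 [hu1 hu2]] := hf Ss0.
exists (f r0 * u0) => s r Ss E.
have [c [d [Sc Ecd]]] := ROre s Ss0.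
have K : F (r * c) = F (r0 * d) by rewrite !rmorphM -E -E0 -!mulrA -!rmorphM Ecd.
apply: (cancel_r (hf Sc)); rewrite -mulrA -rmorphM Ecd rmorphM mulrA -(mulrA (f r0)) hu2 mulr1.
by rewrite -!rmorphM; apply/esym/killF.
Qed.

Definition hq q := epsilon (inhabits 0) (Pq q).

Lemma hq_spec q : Pq q (hq q).
Proof. by have [y hy] := Pq_ex q; exact: (epsilon_spec _ (Pq q) (ex_intro _ y hy)). Qed.

Lemma hq_char q s r y : S s -> q * F s = F r -> y * f s = f r -> hq q = y.
Proof. move=> Ss E E'; apply: (cancel_r (hf Ss)); rewrite E'; exact: hq_spec. Qed.

Lemma hq_sub : zmod_morphism hq.
Proof.
move=> q1 q2.
have [s1 [r1 [Ss1 E1]]] := U2 q1; have [s2 [r2 [Ss2 E2]]] := U2 q2.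
have [c [d [Sc Ecd]]] := ROre s1 Ss2.
have Ss : S (s1 * c) by apply: SM.
have F1 : q1 * F (s1 * c) = F (r1 * c) by rewrite !rmorphM mulrA E1.
have F2 : q2 * F (s1 * c) = F (r2 * d) by rewrite Ecd !rmorphM mulrA E2.
apply: (hq_char (r := r1 * c - r2 * d) Ss).
  by rewrite mulrBl F1 F2 rmorphB.
by rewrite mulrBl rmorphB (hq_spec Ss F1) (hq_spec Ss F2).
Qed.

Lemma hq_mul : monoid_morphism hq.
Proof.
split.
  have S1 : S 1 by case: hS => [[h _] _].
  by apply: (hq_char (s := 1) (r := 1) S1); rewrite ?mul1r.
move=> q1 q2.
have [s1 [r1 [Ss1 E1]]] := U2 q1; have [s2 [r2 [Ss2 E2]]] := U2 q2.
have [c [d [Sc Ecd]]] := ROre r2 Ss1.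
have Ss : S (s2 * c) by apply: SM.
apply: (hq_char (r := r1 * d) Ss).
  by rewrite rmorphM -mulrA (mulrA q2) E2 -rmorphM Ecd rmorphM mulrA E1 -rmorphM.
rewrite rmorphM -mulrA (mulrA (hq q2)) (hq_spec Ss2 E2) -rmorphM Ecd rmorphM mulrA.
by rewrite (hq_spec Ss1 E1) -rmorphM.
Qed.

HB.instance Definition _ := GRing.isZmodMorphism.Build Q B hq hq_sub.
HB.instance Definition _ := GRing.isMonoidMorphism.Build Q B hq hq_mul.

Lemma univR_B : exists g : {rmorphism Q -> B},
  (forall r, g (F r) = f r) /\
  (forall g' : {rmorphism Q -> B}, (forall r, g' (F r) = f r) -> forall x, g' x = g x).
Proof.
have S1 : S 1 by case: hS => [[h _] _].
exists hq; split.
  move=> r; apply: (hq_char (s := 1) (r := r) S1); by rewrite ?rmorph1 ?mulr1.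
move=> g' hg' q; have [s [r [Ss E]]] := U2 q.
apply/esym/(hq_char Ss E); by rewrite -hg' -rmorphM E hg'.
Qed.
End B.

Lemma univR : is_univ_loc S F.
Proof. split => //; move=> B f hf; exact: univR_B. Qed.
End UnivR.

Section UnivL.
Variables (R Q : pzRingType) (S : subs R) (hS : ore_set S) (F : {rmorphism R -> Q}).
Hypotheses (U1 : forall s, S s -> is_invertible (F s))
  (U2 : forall q, exists s r, S s /\ F s * q = F r)
  (U3 : forall x, F x = 0 -> exists s s', S s /\ S s' /\ s' * x * s = 0).

Section B.
Variables (B : pzRingType) (f : {rmorphism R -> B}) (hf : forall s, S s -> is_invertible (f s)).

Lemma killF' x y : F x = F y -> f x = f y.
Proof.
move=> E; apply/eqP; rewrite -subr_eq0 -rmorphB; apply/eqP.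
have [s [s' [Ss [Ss' E']]]] := @U3 (x - y) ltac:(by rewrite rmorphB E subrr).
exact: kill_gen hf Ss Ss' E'.
Qed.

Definition Pq' q y := forall s r, S s -> F s * q = F r -> f s * y = f r.

Lemma SM' a b : S a -> S b -> S (a * b).
Proof. by case: hS => [[_ [_ h]] _]; apply: h. Qed.
Lemma LOre r s : S s -> exists s' r', S s' /\ s' * r = r' * s.
Proof. by case: hS => [_ [h _]]; apply: h. Qed.

Lemma Pq_ex' q : exists y, Pq' q y.
Proof.
have [s0 [r0 [Ss0 E0]]] := U2 q.
have [u0 [hu1 hu2]] := hf Ss0.
exists (u0 * f r0) => s r Ss E.
have [c [d [Sc Ecd]]] := LOre s Ss0.
have K : F (c * r) = F (d * r0) by rewrite !rmorphM -E -E0 !mulrA -!rmorphM Ecd.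
apply: (cancel_l (hf Sc)); rewrite mulrA -rmorphM Ecd rmorphM -mulrA (mulrA (f s0)) hu1 mul1r.
by rewrite -!rmorphM; apply/esym/killF'.
Qed.

Definition hq' q := epsilon (inhabits 0) (Pq' q).

Lemma hq_spec' q : Pq' q (hq' q).
Proof. by have [y hy] := Pq_ex' q; exact: (epsilon_spec _ (Pq' q) (ex_intro _ y hy)). Qed.

Lemma hq_char' q s r y : S s -> F s * q = F r -> f s * y = f r -> hq' q = y.
Proof. move=> Ss E E'; apply: (cancel_l (hf Ss)); rewrite E'; exact: hq_spec'. Qed.

Lemma hq_sub' : zmod_morphism hq'.
Proof.
move=> q1 q2.
have [s1 [r1 [Ss1 E1]]] := U2 q1; have [s2 [r2 [Ss2 E2]]] := U2 q2.
have [c [d [Sc Ecd]]] := LOre s1 Ss2.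
have Ss : S (c * s1) by apply: SM'.
have F1 : F (c * s1) * q1 = F (c * r1) by rewrite !rmorphM -mulrA E1.
have F2 : F (c * s1) * q2 = F (d * r2) by rewrite Ecd !rmorphM -mulrA E2.
apply: (hq_char' (r := c * r1 - d * r2) Ss).
  by rewrite mulrBr F1 F2 rmorphB.
by rewrite mulrBr rmorphB (hq_spec' Ss F1) (hq_spec' Ss F2).
Qed.

Lemma hq_mul' : monoid_morphism hq'.
Proof.
split.
  have S1 : S 1 by case: hS => [[h _] _].
  by apply: (hq_char' (s := 1) (r := 1) S1); rewrite ?mulr1.
move=> q1 q2.
have [s1 [r1 [Ss1 E1]]] := U2 q1; have [s2 [r2 [Ss2 E2]]] := U2 q2.
have [c [d [Sc Ecd]]] := LOre r1 Ss2.
have Ss : S (c * s1) by apply: SM'.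
apply: (hq_char' (r := d * r2) Ss).
  by rewrite rmorphM mulrA -(mulrA (F c)) E1 -rmorphM Ecd rmorphM -mulrA E2 -rmorphM.
rewrite rmorphM mulrA -(mulrA (f c)) (hq_spec' Ss1 E1) -rmorphM Ecd rmorphM -mulrA.
by rewrite (hq_spec' Ss2 E2) -rmorphM.
Qed.

HB.instance Definition _ := GRing.isZmodMorphism.Build Q B hq' hq_sub'.
HB.instance Definition _ := GRing.isMonoidMorphism.Build Q B hq' hq_mul'.

Lemma univL_B : exists g : {rmorphism Q -> B},
  (forall r, g (F r) = f r) /\
  (forall g' : {rmorphism Q -> B}, (forall r, g' (F r) = f r) -> forall x, g' x = g x).
Proof.
have S1 : S 1 by case: hS => [[h _] _].
exists hq'; split.
  move=> r; apply: (hq_char' (s := 1) (r := r) S1); by rewrite ?rmorph1 ?mul1r.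
move=> g' hg' q; have [s [r [Ss E]]] := U2 q.
apply/esym/(hq_char' Ss E); by rewrite -hg' -rmorphM E hg'.
Qed.
End B.

Lemma univL : is_univ_loc S F.
Proof. split => //; move=> B f hf; exact: univL_B. Qed.
End UnivL.

Lemma univ_iso (R L Q : pzRingType) (S : subs R) (phi : {rmorphism R -> L})
  (psi : {rmorphism R -> Q}) : is_univ_loc S phi -> is_univ_loc S psi -> R_iso phi psi.
Proof.
move=> [I1 P1] [I2 P2].
have [g [hg _]] := P1 Q psi I2.
have [k [hk _]] := P2 L phi I1.
have [i1 [_ u1]] := P1 L phi I1.
have [i2 [_ u2]] := P2 Q psi I2.
have H1 : forall r, (k \o g) (phi r) = phi r by move=> r /=; rewrite hg hk.
have H2 : forall r, (g \o k) (psi r) = psi r by move=> r /=; rewrite hk hg.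
exists g; split => //; exists k => x.
  have e1 := u1 _ H1 x; have e2 := u1 idfun (fun r => erefl) x; simpl in e1, e2.
  by rewrite e1 -e2.
have e1 := u2 _ H2 x; have e2 := u2 idfun (fun r => erefl) x; simpl in e1, e2.
by rewrite e1 -e2.
Qed.

Lemma key (R : pzRingType) (S : subs R) (hS : ore_set S)
  (L : pzRingType) (phi : {rmorphism R -> L}) (hL : is_univ_loc S phi)
  (Rr : pzRingType) (pir : {rmorphism R -> Rr}) (pir_surj : forall y : Rr, exists r, pir r = y)
  (pir_ker : forall r, pir r = 0 <-> ass_r S r) x :
  phi x = 0 -> exists s s', S s /\ S s' /\ s' * x * s = 0.
Proof.
move=> Ex.
case: hS => [[S1 [S0 SM]] [SL SR]].
pose T := image_of pir S.
have T1 : T 1 by exists 1; rewrite rmorph1.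
have TM : forall a b, T a -> T b -> T (a * b).
  move=> a b [a0 [Sa <-]] [b0 [Sb <-]]; exists (a0 * b0); split; [exact: SM | exact: rmorphM].
have Tore : left_ore T.
  move=> r s [s0 [Ss0 <-]]; have [r0 <-] := pir_surj r.
  have [c [d [Sc E]]] := SL r0 s0 Ss0.
  exists (pir c), (pir d); split; first by exists c.
  by rewrite -!rmorphM E.
have TlC : forall t, T t -> lC t.
  move=> t [s0 [Ss0 <-]] y; have [y0 <-] := pir_surj y.
  rewrite -rmorphM => /pir_ker [s' [Ss' E]]; apply/pir_ker.
  by exists (s0 * s'); split; [exact: SM | rewrite mulrA].
have [B [f [finv fker]]] := loc_exists T1 TM Tore TlC.
have [g [hg _]] := hL.2 B (f \o pir) (fun s Ss => finv _ (ex_intro _ s (conj Ss erefl))).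
have E : f (pir x) = 0 by have := hg x; rewrite Ex rmorph0 /= => <-.
have [t [[s0 [Ss0 <-]] E']] := fker _ E.
move: E'; rewrite -rmorphM => /pir_ker [s'' [Ss'' E'']].
by exists s'', s0.
Qed.

Unset Implicit Arguments.

Theorem corollary1p7
  (R : pzRingType) (S : subs R) (hS : ore_set S)
  (L : pzRingType) (phi : {rmorphism R -> L}) (hL : is_univ_loc S phi)
  (Rl : pzRingType) (pil : {rmorphism R -> Rl}) (pil_surj : forall y : Rl, exists r, pil r = y)
  (pil_ker : forall r, pil r = 0 <-> ass_l S r)
  (Rr : pzRingType) (pir : {rmorphism R -> Rr}) (pir_surj : forall y : Rr, exists r, pir r = y)
  (pir_ker : forall r, pir r = 0 <-> ass_r S r) :
  let a : subs R := fun r => phi r = 0 in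
  (forall x y, ass_l S x -> ass_r S y -> a (x + y)) /\
  (in_Den_r' (image_of pil S) (image_of pil a) /\
   forall (Ql : pzRingType) (sl : {rmorphism Rl -> Ql}),
     is_right_fractions (image_of pil S) sl ->
     R_iso phi (fun r => sl (pil r))) /\
  (in_Den_l' (image_of pir S) (image_of pir a) /\
   forall (Qr : pzRingType) (sr : {rmorphism Rr -> Qr}),
     is_left_fractions (image_of pir S) sr ->
     R_iso phi (fun r => sr (pir r)) /\
     forall (Ql : pzRingType) (sl : {rmorphism Rl -> Ql}),
       is_right_fractions (image_of pil S) sl ->
       R_iso (fun r => sr (pir r)) (fun r => sl (pil r))) /\
  (least_ideal (S_in_lC_mod S) (ass_r S) /\ least_ideal (S_in_rC_mod S) (ass_l S)).
Proof.
move=> a.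
have hS' := hS.
case: hS' => [[S1 [S0 SM]] [SL SR]].
have phiI := hL.1.
have Key := key hS hL pir_surj pir_ker.
have UR : forall (Ql : pzRingType) (sl : {rmorphism Rl -> Ql}),
    is_right_fractions (image_of pil S) sl -> is_univ_loc S (sl \o pil).
  move=> Ql sl [RF1 [RF2 RF3]]; apply: univR => //.
  - by move=> s Ss; apply: RF1; exists s.
  - move=> q; have [t [a0 [[s0 [Ss0 Et]] [u [hu1 [hu2 ->]]]]]] := RF2 q.
    have [r0 Er] := pil_surj a0.
    exists s0, r0; split => //=; rewrite Et Er -mulrA hu1 mulr1 //.
  - move=> x /= /RF3 [t [[s0 [Ss0 <-]] E]].
    move: E; rewrite -rmorphM => /pil_ker [s' [Ss' E']].
    by exists s0, s'; rewrite mulrA in E'.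
have UL : forall (Qr : pzRingType) (sr : {rmorphism Rr -> Qr}),
    is_left_fractions (image_of pir S) sr -> is_univ_loc S (sr \o pir).
  move=> Qr sr [RF1 [RF2 RF3]]; apply: univL => //.
  - by move=> s Ss; apply: RF1; exists s.
  - move=> q; have [t [a0 [[s0 [Ss0 Et]] [u [hu1 [hu2 ->]]]]]] := RF2 q.
    have [r0 Er] := pir_surj a0.
    exists s0, r0; split => //=; rewrite Et Er mulrA hu2 mul1r //.
  - move=> x /= /RF3 [t [[s0 [Ss0 <-]] E]].
    move: E; rewrite -rmorphM => /pir_ker [s' [Ss' E']].
    by exists s', s0.
split.
  move=> x y [s [Ss Ex]] [t [St Ey]]; rewrite /a rmorphD.
  rewrite (kill_gen (s := 1) (s' := s) phiI S1 Ss) ?mulr1 //.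
  by rewrite (kill_gen (s := t) (s' := 1) phiI St S1) ?mul1r ?addr0.
split.
  split; last first.
    by move=> Ql sl RF; apply: (univ_iso hL (UR Ql sl RF)).
  split.
    split.
      split; first by exists 1; rewrite rmorph1.
      split.
        move=> [s [Ss E]]; move: E => /pil_ker [s' [Ss' E]].
        by apply: S0; rewrite -E; apply: SM.
      move=> x y [x0 [Sx <-]] [y0 [Sy <-]]; exists (x0 * y0); split; [exact: SM | exact: rmorphM].
    split.
      move=> r s [s0 [Ss0 <-]]; have [r0 <-] := pil_surj r.
      have [c [d [Sc E]]] := SR r0 s0 Ss0.
      exists (pil c), (pil d); split; first by exists c.
      by rewrite -!rmorphM E.
    move=> r t [s0 [Ss0 <-]]; have [r0 <-] := pil_surj r.
    rewrite -rmorphM => /pil_ker [s' [Ss' E]].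
    exists 1; split; first by exists 1; rewrite rmorph1.
    rewrite mulr1; apply/pil_ker; exists (s' * s0); split; [exact: SM | by rewrite -mulrA].
  split.
    move=> x; split.
      case=> t [[s0 [Ss0 <-]]]; have [x0 <-] := pil_surj x.
      rewrite -rmorphM => /pil_ker [s' [Ss' E]].
      exists x0; split => //; rewrite /a.
      by apply: (kill_gen (s := s0) (s' := s') phiI Ss0 Ss'); rewrite -mulrA.
    case=> x0 [ax0 <-].
    have [s [s' [Ss [Ss' E]]]] := Key x0 ax0.
    exists (pil s); split; first by exists s.
    rewrite -rmorphM; apply/pil_ker; exists s'; split => //; by rewrite mulrA.
  move=> t [s0 [Ss0 <-]] x; have [x0 <-] := pil_surj x.
  rewrite -rmorphM => /pil_ker [s' [Ss' E]].
  apply/pil_ker; exists (s' * s0); split; [exact: SM | by rewrite -mulrA].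
split.
  split; last first.
    move=> Qr sr RF; split; first exact: (univ_iso hL (UL Qr sr RF)).
    move=> Ql sl RF'; exact: (univ_iso (UL Qr sr RF) (UR Ql sl RF')).
  split.
    split.
      split; first by exists 1; rewrite rmorph1.
      split.
        move=> [s [Ss E]]; move: E => /pir_ker [s' [Ss' E]].
        by apply: S0; rewrite -E; apply: SM.
      move=> x y [x0 [Sx <-]] [y0 [Sy <-]]; exists (x0 * y0); split; [exact: SM | exact: rmorphM].
    split.
      move=> r s [s0 [Ss0 <-]]; have [r0 <-] := pir_surj r.
      have [c [d [Sc E]]] := SL r0 s0 Ss0.
      exists (pir c), (pir d); split; first by exists c.
      by rewrite -!rmorphM E.
    move=> r t [s0 [Ss0 <-]]; have [r0 <-] := pir_surj r.
    rewrite -rmorphM => /pir_ker [s' [Ss' E]].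
    exists 1; split; first by exists 1; rewrite rmorph1.
    rewrite mul1r; apply/pir_ker; exists (s0 * s'); split; [exact: SM | by rewrite mulrA].
  split.
    move=> x; split.
      case=> t [[s0 [Ss0 <-]]]; have [x0 <-] := pir_surj x.
      rewrite -rmorphM => /pir_ker [s' [Ss' E]].
      exists x0; split => //; rewrite /a.
      by apply: (kill_gen (s := s') (s' := s0) phiI Ss' Ss0).
    case=> x0 [ax0 <-].
    have [s [s' [Ss [Ss' E]]]] := Key x0 ax0.
    exists (pir s'); split; first by exists s'.
    rewrite -rmorphM; apply/pir_ker; exists s; split => //.
  move=> t [s0 [Ss0 <-]] x; have [x0 <-] := pir_surj x.
  rewrite -rmorphM => /pir_ker [s' [Ss' E]].
  apply/pir_ker; exists (s0 * s'); split; [exact: SM | by rewrite mulrA].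
split.
  split.
    split; first by exists 1; split => //; rewrite mul0r.
    split.
      move=> x y [s1 [Ss1 E1]] [s2 [Ss2 E2]].
      have [c [d [Sc E]]] := SR s1 s2 Ss2.
      exists (s1 * c); split; first exact: SM.
      by rewrite mulrBl mulrA E1 mul0r E mulrA E2 mul0r subrr.
    split.
      by move=> r x [s [Ss E]]; exists s; rewrite -mulrA E mulr0.
    move=> r x [s [Ss E]].
    have [c [d [Sc E']]] := SR r s Ss.
    by exists c; split => //; rewrite -mulrA E' mulrA E mul0r.
  split.
    move=> s x Ss [s' [Ss' E]]; exists (s * s'); split; [exact: SM | by rewrite mulrA].
  move=> c [c0 [csub [cl cr]]] P x [s [Ss E]].
  by apply: (P s x Ss); rewrite E.
split.
  split; first by exists 1; split => //; rewrite mulr0.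
  split.
    move=> x y [s1 [Ss1 E1]] [s2 [Ss2 E2]].
    have [c [d [Sc E]]] := SL s1 s2 Ss2.
    exists (c * s1); split; first exact: SM.
    by rewrite mulrBr -mulrA E1 mulr0 E -mulrA E2 mulr0 subrr.
  split; last first.
    by move=> r x [s [Ss E]]; exists s; rewrite mulrA E mul0r.
  move=> r x [s [Ss E]].
  have [c [d [Sc E']]] := SL r s Ss.
  by exists c; split => //; rewrite mulrA E' -mulrA E mulr0.
split.
  move=> s x Ss [s' [Ss' E]]; exists (s' * s); split; [exact: SM | by rewrite -mulrA].
move=> c [c0 [csub [cl cr]]] P x [s [Ss E]].
by apply: (P s x Ss); rewrite E.
Qed.
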